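(* For every $t\ge2$, every sequence $\theta_1,\dots,\theta_{t-1}\in\Theta$, and every $\theta\in\Theta$, the effective number of trajectories satisfies $\eta_t(\theta)\ge T_t(\theta)$. Moreover, if $v(\theta)=\sup_{\theta'\in\Theta}d_2(p_\theta\|p_{\theta'})$ is finite, then $\eta_t(\theta)\ge\frac{t-1}{v(\theta)}$.
   Context: Each $\theta\in\Theta$ defines a policy inducing a trajectory distribution $p_\theta$. For probability measures $P\ll Q$, $d_2(P\|Q)=\int(\frac{dP}{dQ})^2dQ$ ($+\infty$ if $P\not\ll Q$). Given previously executed parameters $\theta_1,\dots,\theta_{t-1}$, $\Phi_t=\frac1{t-1}\sum_{i=1}^{t-1}p_{\theta_i}$, $\eta_t(\theta)=\frac{t-1}{d_2(p_\theta\|\Phi_t)}$ (equal to $0$ if the divergence is infinite), and $T_t(\theta)=\sum_{i=1}^{t-1}\mathbb 1\{\theta_i=\theta\}$. *)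

(* Defs.v *)
From HB Require Import structures.
From mathcomp Require Import all_boot all_order all_algebra.
From mathcomp Require Import all_classical all_reals all_analysis.
Set Implicit Arguments. Unset Strict Implicit. Unset Printing Implicit Defensive.
Import Order.TTheory GRing.Theory Num.Theory.
Local Open Scope classical_set_scope.
Local Open Scope ring_scope.

Section mixture.
Local Open Scope ereal_scope.
Context d (T : measurableType d) (R : realType).
Variables (n : nat) (P : 'I_n -> probability T R).

Definition mixture (A : set T) : \bar R :=
  ((n%:R)^-1)%:E * \sum_(i < n) P i A.

Let mixture0 : mixture set0 = 0.
Proof. by rewrite /mixture big1 ?mule0 // => i _; rewrite measure0. Qed.

Let mixture_ge0 A : 0 <= mixture A.
Proof.
rewrite /mixture; apply: mule_ge0; first by rewrite lee_fin invr_ge0.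
by apply: sume_ge0 => i _.
Qed.

Let mixture_sigma_additive : semi_sigma_additive mixture.
Proof.
move=> F mF tF mUF; rewrite /mixture.
rewrite [X in X @ _ --> _](_ : _ = (fun N => ((n%:R)^-1)%:E *
    \sum_(0 <= j < N) \sum_(i < n) P i (F j))); last first.
  apply/funext => N; rewrite ge0_sume_distrr // => j _.
  by apply: sume_ge0 => i _.
apply: cvgeZl => //.
rewrite [X in _ --> X](_ : _ =
    lim ((fun N => \sum_(0 <= j < N) \sum_(i < n) P i (F j)) @ \oo)).
  by apply: is_cvg_ereal_nneg_natsum => k _; exact: sume_ge0.
rewrite nneseries_sum//; apply: eq_bigr => /= i _.
exact: measure_semi_bigcup.
Qed.

HB.instance Definition _ := isMeasure.Build _ _ _ mixture
  mixture0 mixture_ge0 mixture_sigma_additive.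

Let mixture_fin : fin_num_fun mixture.
Proof.
move=> U mU; rewrite /mixture fin_numM //.
by apply/sum_fin_numP => i _ _; rewrite fin_num_measure.
Qed.

HB.instance Definition _ := Measure_isFinite.Build _ _ _ mixture mixture_fin.

End mixture.

Section divergence.
Local Open Scope ereal_scope.
Local Open Scope charge_scope.
Context d (T : measurableType d) (R : realType).

Definition d2 (P : probability T R) (Q : {finite_measure set T -> \bar R}) : \bar R :=
  if pselect (P `<< Q) then
    \int[Q]_x (('d (charge_of_finite_measure P) '/d Q) x ^+ 2)
  else +oo.

End divergence.

Section effective_number.
Context d (T : measurableType d) (R : realType) (Theta : Type).
Variable p : Theta -> probability T R.

(* Phi_t = (1/(t-1)) sum_{i=1}^{t-1} p_{theta_i}; the sequence
   theta_1..theta_{t-1} is ths : 'I_(t.-1) -> Theta (0-indexed). *)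
Definition Phi (t : nat) (ths : 'I_t.-1 -> Theta) :
  {finite_measure set T -> \bar R} := mixture (fun i => p (ths i)).

Definition eta_t (t : nat) (ths : 'I_t.-1 -> Theta) (th : Theta) : R :=
  match d2 (p th) (Phi ths) with
  | r%:E => (t.-1)%:R / r
  | _ => 0
  end.

Definition Tcount (t : nat) (ths : 'I_t.-1 -> Theta) (th : Theta) : nat :=
  \sum_(i < t.-1) (if `[< ths i = th >] then 1 else 0)%N.

Definition vsup (th : Theta) : \bar R :=
  ereal_sup [set d2 (p th) (p th') | th' in [set: Theta]].

End effective_number.

(* Main.v *)
Set Warnings "-all".
Require Import Defs.
From HB Require Import structures.
From mathcomp Require Import all_boot all_order all_algebra.
From mathcomp Require Import all_classical all_reals all_analysis.
From mathcomp Require Import measurable_realfun lebesgue_integral charge.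
From mathcomp Require Import ring lra.
Import Order.TTheory GRing.Theory Num.Theory.
Local Open Scope classical_set_scope.
Local Open Scope ring_scope.

Section gen.
Context d (T : measurableType d) (R : realType).
Local Open Scope ereal_scope.
Local Open Scope charge_scope.

Lemma null_of_abs (mu : {measure set T -> \bar R}) (A : set T) (f : T -> \bar R) :
  measurable A -> measurable_fun A f -> (forall x, A x -> f x != 0) ->
  \int[mu]_(x in A) `|f x| <= 0 -> mu A = 0.
Proof.
move=> mA mf fn0 hle.
have h0 : \int[mu]_(x in A) `|f x| = 0.
  by apply/eqP; rewrite eq_le hle integral_ge0 // => x Ax.
move/(ae_eq_integral_abs mu mA mf): h0 => [N [mN N0 sub]].
apply/eqP; rewrite -measure_le0 -N0; apply: le_measure; rewrite ?inE //.
move=> x Ax; apply: sub => /= /(_ Ax) fx0; move: (fn0 x Ax); by rewrite fx0 eqxx.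
Qed.

Variables (P : probability T R) (Q : {finite_measure set T -> \bar R}).
Hypothesis PQ : P `<< Q.
Let g := 'd (charge_of_finite_measure P) '/d Q.
Let PQ' : charge_of_finite_measure P `<< Q := PQ.

Lemma g_meas : measurable_fun setT g.
Proof. exact: measurable_int (Radon_Nikodym_integrable PQ'). Qed.

Lemma g_intg : Q.-integrable setT g.
Proof. exact: Radon_Nikodym_integrable PQ'. Qed.

Lemma g_int A : measurable A -> P A = \int[Q]_(x in A) g x.
Proof. by move=> mA; exact: (Radon_Nikodym_integral PQ' mA). Qed.

Lemma g_fin x : g x \is a fin_num.
Proof. exact: Radon_Nikodym_fin_num PQ'. Qed.

Lemma g_neg_null : Q [set x | g x < 0] = 0.
Proof.
have mA : measurable [set x | g x < 0].
  by rewrite -[X in measurable X]setTI; apply: measurable_lte => //; exact: g_meas.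
have mgA : measurable_fun [set x | g x < 0] g by apply: measurable_funS g_meas.
apply: (@null_of_abs Q _ g mA mgA); first by move=> x /= /lt_eqF ->.
have -> : \int[Q]_(x in [set x | g x < 0]) `|g x| =
          \int[Q]_(x in [set x | g x < 0]) ((EFin \o cst 0%R) x - g x).
  by apply: eq_integral => x /[!inE] /= gx; rewrite sub0e lte0_abs.
rewrite integralB //; last first.
  by apply: integrableS g_intg.
  exact: finite_measure_integrable_cst.
rewrite -g_int // (@integral_cst _ _ _ Q _ mA 0%R) mul0e sub0e leeNl oppe0.
exact: measure_ge0.
Qed.

Lemma g_ae_ge0 : {ae Q, forall x, 0 <= g x}.
Proof.
exists [set x | g x < 0]; split => //.
  by rewrite -[X in measurable X]setTI; apply: measurable_lte => //; exact: g_meas.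
  exact: g_neg_null.
by move=> x /= /negP; rewrite -ltNge.
Qed.

Lemma g_le_null (c : R) : (forall A, measurable A -> P A <= c%:E * Q A) ->
  Q [set x | c%:E < g x] = 0.
Proof.
move=> hPQ.
have mA : measurable [set x | c%:E < g x].
  by rewrite -[X in measurable X]setTI; apply: measurable_lte => //; exact: g_meas.
have mgA : measurable_fun [set x | c%:E < g x] (fun x => g x - (EFin \o cst c) x).
  apply: emeasurable_funB; first exact: measurable_funS g_meas.
  by apply/measurable_EFinP; exact: measurable_cst.
apply: (@null_of_abs Q _ _ mA mgA).
  move=> x /= cg; have gx := g_fin x; move: cg gx; case: (g x) => //= r cr _.
  by rewrite -EFinB eqe subr_eq0 gt_eqF // -lte_fin.
have -> : \int[Q]_(x in [set x | c%:E < g x]) `|g x - (EFin \o cst c) x| =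
          \int[Q]_(x in [set x | c%:E < g x]) (g x - (EFin \o cst c) x).
  by apply: eq_integral => x /[!inE] /= gx; rewrite gee0_abs //; move: gx (g_fin x); case: (g x) => //= r; rewrite lte_fin => cr _; rewrite -EFinB lee_fin subr_ge0 ltW.
rewrite integralB //; last first.
  exact: finite_measure_integrable_cst.
  by apply: integrableS g_intg.
rewrite -g_int // (@integral_cst _ _ _ Q _ mA c%:E) sube_le0; exact: hPQ.
Qed.

Lemma g_pos_int : \int[Q]_x g x = \int[Q]_x g^\+ x.
Proof.
apply: ae_eq_integral => //; first exact: g_meas.
  exact: measurable_funepos g_meas.
apply: filterS g_ae_ge0 => x gx _.
by rewrite funeposE; apply/esym/max_l.
Qed.

Lemma g_sq_ge1 : Q setT = 1 -> 1 <= \int[Q]_x (g x ^+ 2).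
Proof.
move=> Q1.
have int1 : \int[Q]_x g^\+ x = 1 by rewrite -g_pos_int -g_int // probability_setT.
have mgp : measurable_fun setT g^\+ by exact: measurable_funepos g_meas.
have mg2 : measurable_fun setT (fun x => g x ^+ 2).
  by under eq_fun do rewrite expe2; exact: emeasurable_funM g_meas g_meas.
have h2 : 2%:E <= 1 + \int[Q]_x (g x ^+ 2).
  have -> : 2%:E = \int[Q]_x (2%:E * g^\+ x).
    by rewrite ge0_integralZl_EFin // ?int1 ?mule1 // => x _; exact: funepos_ge0.
  have -> : 1 = \int[Q]_x (cst 1 x).
    by rewrite (@integral_cst _ _ _ Q setT measurableT 1) mul1e; exact (esym Q1).
  have mc1 : measurable_fun setT (cst 1 : T -> \bar R) by exact: measurable_cst.
  have sq0 : forall x, setT x -> 0 <= g x ^+ 2 by move=> x _; exact (sqre_ge0 _).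
  have c10 : forall x, setT x -> 0 <= (cst 1 : T -> \bar R) x by move=> x _; exact: lee01.
  rewrite -ge0_integralD //.
  apply: ge0_le_integral => //.
  - by move=> x _; apply: mule_ge0; [by rewrite lee_fin | exact: funepos_ge0].
  - exact: emeasurable_funM (measurable_cst _) mgp.
  - exact: emeasurable_funD.
  move=> x _; rewrite funeposE /=; case: (g x) (g_fin x) => //= s _.
  rewrite -EFin_max -!EFinM -EFinD lee_fin.
  have [s0|s0] := leP 0%R s.
    have := sqr_ge0 (s - 1)%R; nra.
  have := sqr_ge0 (s - 1)%R; nra.
move: h2; have := integral_ge0 Q (D:=setT) (f:=fun x => g x ^+ 2) (fun x _ => sqre_ge0 (g x)).
case: (\int[Q]_x (g x ^+ 2)) => // r _.
by rewrite -EFinD !lee_fin => ?; lra.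
by rewrite leey.
Qed.

End gen.
Arguments g_meas {d T R P Q}.
Arguments g_intg {d T R P Q}.
Arguments g_int {d T R P Q}.
Arguments g_fin {d T R P Q}.
Arguments g_ae_ge0 {d T R P Q}.
Arguments g_le_null {d T R P Q}.
Arguments g_pos_int {d T R P Q}.
Arguments g_sq_ge1 {d T R P Q}.

Section mix.
Context d (T : measurableType d) (R : realType).
Local Open Scope ereal_scope.
Local Open Scope charge_scope.
Variables (n : nat) (Qs : 'I_n -> probability T R).
Hypothesis n0 : (0 < n)%N.
Let M : {finite_measure set T -> \bar R} := mixture Qs.

Lemma nM A : n%:R%:E * M A = \sum_(i < n) Qs i A.
Proof.
rewrite /M /= /mixture muleA -EFinM divff ?mul1e //.
by rewrite pnatr_eq0 -lt0n.
Qed.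

Lemma mix_setT : M setT = 1.
Proof.
rewrite /M /= /mixture.
under eq_bigr do rewrite probability_setT.
rewrite sumEFin sumr_const card_ord -EFinM mulVf //.
by rewrite pnatr_eq0 -lt0n.
Qed.

Lemma mix_ge i A : Qs i A <= n%:R%:E * M A.
Proof.
rewrite nM (bigD1 i) //=; apply: leeDl.
by apply: sume_ge0 => j _.
Qed.

Lemma mix_dom i : Qs i `<< M.
Proof.
apply/null_content_dominatesP => A mA MA0.
apply/eqP; rewrite eq_le measure_ge0 andbT.
by have := mix_ge i A; rewrite MA0 mule0.
Qed.

End mix.
Arguments nM {d T R n Qs}.
Arguments mix_setT {d T R n Qs}.
Arguments mix_ge {d T R n Qs}.
Arguments mix_dom {d T R n Qs}.

Lemma real_ineq (R : realType) n (G : R) (Gi Hi : 'I_n -> R) :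
  (forall i, 0 <= Hi i) -> (forall i, G = Gi i * Hi i) -> \sum_i Hi i = n%:R ->
  n%:R * G ^+ 2 <= \sum_i Gi i ^+ 2 * Hi i.
Proof.
move=> H0 HG Hs.
have h i : 2 * G ^+ 2 - G ^+ 2 * Hi i <= Gi i ^+ 2 * Hi i.
  rewrite (HG i) -subr_ge0.
  have -> : Gi i ^+ 2 * Hi i - (2 * (Gi i * Hi i) ^+ 2 - (Gi i * Hi i) ^+ 2 * Hi i)
      = Hi i * (Gi i - Gi i * Hi i) ^+ 2 by ring.
  by rewrite mulr_ge0 // sqr_ge0.
apply: le_trans (ler_sum _ (fun i _ => h i)).
rewrite sumrB sumr_const card_ord -mulr_sumr Hs.
rewrite -mulr_natl; lra.
Qed.

Module SF := Radon_Nikodym_SigmaFinite.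

Section conv.
Context d (T : measurableType d) (R : realType).
Local Open Scope ereal_scope.
Local Open Scope charge_scope.
Variables (n : nat) (Qs : 'I_n -> probability T R) (P : probability T R).
Hypothesis n0 : (0 < n)%N.
Hypothesis PQi : forall i, P `<< Qs i.
Let M : {finite_measure set T -> \bar R} := mixture Qs.
Let g := 'd (charge_of_finite_measure P) '/d M.
Let gi i := 'd (charge_of_finite_measure P) '/d (Qs i).
Let ki i := SF.f (Qs i) M.

Lemma conv : n%:R%:E * \int[M]_x (g x ^+ 2) <= \sum_(i < n) \int[Qs i]_x (gi i x ^+ 2).
Proof.
have dM i : Qs i `<< M := mix_dom n0 i.
pose i0 : 'I_n := Ordinal n0.
have PM : P `<< M := null_dominates_trans (PQi i0) (dM i0).
have mgi i : measurable_fun setT (gi i) := g_meas (PQi i).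
have mg : measurable_fun setT g := g_meas PM.
have ki0 i x : 0 <= ki i x := SF.f_ge0 (dM i) x.
have kfin i x : ki i x \is a fin_num := SF.f_fin_num (dM i) x.
have mk i : measurable_fun setT (ki i) := measurable_int _ (SF.f_integrable (dM i)).
have gfin x : g x \is a fin_num := g_fin PM x.
have gifin i x : gi i x \is a fin_num := g_fin (PQi i) x.
have B1 i : {ae M, forall x, setT x -> g x = gi i x * ki i x}.
  have c := @Radon_Nikodym_chain_rule _ _ _ (charge_of_finite_measure P) M (Qs i) (PQi i) (dM i).
  have e := ae_eq_Radon_Nikodym_SigmaFinite (dM i) measurableT.
  apply: filterS2 c e => x h1 h2 _.
  apply: (eq_trans (h1 I)) => /=; congr (_ * _); exact/esym/(h2 I).
have B2 : {ae M, forall x, setT x -> \sum_(i < n) ki i x = n%:R%:E}.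
  apply: (@integral_ae_eq _ _ _ M setT measurableT (cst n%:R%:E) (fun x => \sum_(i < n) ki i x)) => //.
  - by apply: integrable_sum => // i _; exact: SF.f_integrable (dM i).
  move=> E _ mE.
  rewrite integral_sum //; last first.
    by move=> i; apply: integrableS (SF.f_integrable (dM i)).
  transitivity (\sum_(i < n) Qs i E).
    by apply: eq_bigr => i _; exact (esym (SF.f_integral (dM i) mE)).
  by rewrite (@integral_cst _ _ _ M E mE); apply/esym; exact: nM.
have B := filter_forall (ae_filter_ringOfSetsType M) B1.
have key : {ae M, forall x, setT x -> n%:R%:E * g x ^+ 2 <= \sum_(i < n) (gi i x ^+ 2 * ki i x)}.
  apply: filterS2 B B2 => x h1 h2 _.
  rewrite -(fineK (gfin x)).
  under eq_bigr => i _ do rewrite -(fineK (gifin i x)) -(fineK (kfin i x)).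
  rewrite -EFin_expe -EFinM.
  under eq_bigr do rewrite -EFin_expe -EFinM.
  rewrite sumEFin lee_fin.
  apply: real_ineq.
  - by move=> i; rewrite -lee_fin fineK.
  - by move=> i; apply: EFin_inj; rewrite EFinM !fineK // -(h1 i).
  - apply: EFin_inj; rewrite -sumEFin -(h2 I).
    by apply: eq_bigr => i _; rewrite fineK.
have mgi2 i : measurable_fun setT (fun x => gi i x ^+ 2).
  by under eq_fun do rewrite expe2; exact: emeasurable_funM.
have mg2 : measurable_fun setT (fun x => g x ^+ 2).
  by under eq_fun do rewrite expe2; exact: emeasurable_funM.
have -> : \sum_(i < n) \int[Qs i]_x (gi i x ^+ 2) =
    \int[M]_x (\sum_(i < n) (gi i x ^+ 2 * ki i x)).
  rewrite ge0_integral_sum //; last first.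
    by move=> i x _; apply: mule_ge0; [exact (sqre_ge0 _) | exact: ki0].
    by move=> i; apply: emeasurable_funM.
  apply: eq_bigr => i _.
  symmetry; apply: (SF.change_of_variables (dM i)) => //. move=> x. exact (sqre_ge0 _).
rewrite -ge0_integralZl_EFin //; last first.
  by move=> x _; exact (sqre_ge0 _).
apply: ae_ge0_le_integral => //.
- by move=> x _; apply: mule_ge0; [rewrite lee_fin | exact (sqre_ge0 _)].
- by apply: emeasurable_funM => //; exact: measurable_cst.
- by move=> x _; apply: sume_ge0 => i _; apply: mule_ge0; [exact (sqre_ge0 _) | exact: ki0].
- by apply: emeasurable_fun_sum => i; apply: emeasurable_funM.
Qed.

End conv.

Section d2lemmas.
Context d (T : measurableType d) (R : realType).
Local Open Scope ereal_scope.
Local Open Scope charge_scope.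

Lemma d2_ge0 (P : probability T R) (Q : {finite_measure set T -> \bar R}) : 0 <= d2 P Q.
Proof.
rewrite /d2; case: pselect => h //=.
by apply: integral_ge0 => x _; exact (sqre_ge0 _).
Qed.

Lemma d2_dom (P : probability T R) (Q : {finite_measure set T -> \bar R}) : P `<< Q ->
  d2 P Q = \int[Q]_x (('d (charge_of_finite_measure P) '/d Q) x ^+ 2).
Proof. by rewrite /d2; case: pselect. Qed.

Lemma d2_ndom (P : probability T R) (Q : {finite_measure set T -> \bar R}) : ~ P `<< Q ->
  d2 P Q = +oo.
Proof. by rewrite /d2; case: pselect. Qed.

End d2lemmas.
Arguments d2_ge0 {d T R}.
Arguments d2_dom {d T R P Q}.
Arguments d2_ndom {d T R P Q}.

Section main.
Context d (X : measurableType d) (R : realType) (Theta : Type).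
Variable p : Theta -> probability X R.
Local Open Scope ereal_scope.

Lemma tcount_le t (ths : 'I_t.-1 -> Theta) th A :
  ((Tcount ths th)%:R)%:E * p th A <= \sum_(i < t.-1) p (ths i) A.
Proof.
rewrite /Tcount natr_sum -sumEFin ge0_sume_distrl; last first.
  by move=> i _; rewrite lee_fin; case: ifP.
apply: lee_sum => i _; case: asboolP => [->|_] /=; first by rewrite mul1e.
by rewrite mul0e measure_ge0.
Qed.

Lemma eta_ge0 t (ths : 'I_t.-1 -> Theta) th : (0 <= eta_t p ths th)%R.
Proof.
rewrite /eta_t; have := d2_ge0 (p th) (Phi p ths).
by case: (d2 _ _) => // r; rewrite lee_fin => r0; rewrite divr_ge0.
Qed.

End main.

Theorem lemma4 (R : realType) (d : measure_display) (X : measurableType d)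
  (Theta : Type) (p : Theta -> probability X R) (t : nat) :
  (2 <= t)%N ->
  forall (ths : 'I_t.-1 -> Theta) (th : Theta),
    (Tcount ths th)%:R <= eta_t p ths th /\
    (vsup p th \is a fin_num -> (t.-1)%:R / fine (vsup p th) <= eta_t p ths th).
Proof.
move=> t2 ths th.
have n0 : (0 < t.-1)%N by rewrite -subn1 subn_gt0.
pose Qs := fun i => p (ths i).
have eta_r : forall r, d2 (p th) (Phi p ths) = r%:E -> eta_t p ths th = t.-1%:R / r.
  by move=> r; rewrite /eta_t => ->.
have nM' A : ((t.-1%:R)%:E * Phi p ths A = \sum_(i < t.-1) p (ths i) A)%E.
  exact: (nM n0 A).
have Phi1 : Phi p ths setT = 1%E by exact: (mix_setT n0).
split.
- have [T0|Tpos] := eqVneq (Tcount ths th) 0%N.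
    by rewrite T0; exact: eta_ge0.
  set T := Tcount ths th in Tpos *.
  have Tp : (0 < T%:R :> R) by rewrite ltr0n lt0n.
  pose c := (T%:R^-1 * t.-1%:R : R).
  have c0 : 0 <= c by rewrite /c mulr_ge0 // invr_ge0 ltW.
  have PA : forall A, measurable A -> (p th A <= c%:E * Phi p ths A)%E.
    move=> A mA; rewrite EFinM -muleA lee_pdivlMl // nM'.
    exact: tcount_le.
  have PM : p th `<< Phi p ths.
    apply/null_content_dominatesP => A mA M0; apply/eqP; rewrite eq_le measure_ge0 andbT.
    by have := PA A mA; rewrite M0 mule0.
  have ae0 := g_ae_ge0 PM.
  have null := g_le_null PM c PA.
  set g := Radon_Nikodym (charge_of_finite_measure (p th)) (Phi p ths) in ae0 null *.
  have mg : measurable_fun setT g := g_meas PM.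
  have mgp := measurable_funepos mg.
  have rle : (\int[Phi p ths]_x (g x ^+ 2) <= c%:E)%E.
    apply: (@le_trans _ _ (\int[Phi p ths]_x (c%:E * g^\+ x))%E).
      have nl : {ae Phi p ths, forall x, g x <= c%:E}%E.
        exists [set x | c%:E < g x]%E; split => //.
          rewrite -[X in measurable X]setTI; apply: measurable_lte => //.
        by move=> x /= /negP; rewrite -ltNge.
      apply: ae_ge0_le_integral => //.
      - by move=> x _; exact (sqre_ge0 _).
      - by under eq_fun do rewrite expe2; exact: emeasurable_funM.
      - by move=> x _; apply: mule_ge0; [rewrite lee_fin | exact: funepos_ge0].
      - exact: emeasurable_funM (measurable_cst _) mgp.
      apply: filterS2 ae0 nl => x h1 h2 _.
      rewrite funeposE max_l //.
      move: h1 h2 (g_fin PM x); rewrite -/g; case: (g x) => //= s.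
      by rewrite -!EFinM !lee_fin => s0 sc _; nra.
    rewrite (@ge0_integralZl_EFin _ _ _ (Phi p ths) setT measurableT (g^\+)%E (fun x _ => funepos_ge0 _ x) mgp c c0).
    by rewrite -(g_pos_int PM) -(g_int PM) // probability_setT mule1.
  have rge := g_sq_ge1 PM Phi1.
  move: rle rge; rewrite -(d2_dom PM).
  case E: (d2 (p th) (Phi p ths)) => [r| |] //; rewrite ?lee_fin => rc r1.
  rewrite (eta_r r E) ler_pdivlMr; last by lra.
  have := ler_wpM2l (ltW Tp) rc; rewrite /c mulrA mulfV ?mul1r //.
  by rewrite gt_eqF.
- move=> vfin.
  have hv th' : (d2 (p th) (p th') <= vsup p th)%E.
    by apply: ereal_sup_ubound; exists th'.
  have PQi i : p th `<< Qs i.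
    apply: contrapT => hn; have := hv (ths i); rewrite d2_ndom //.
    by rewrite leye_eq => /eqP vinf; move: vfin; rewrite vinf.
  pose i0 : 'I_t.-1 := Ordinal n0.
  have PM : p th `<< Phi p ths := null_dominates_trans (PQi i0) (mix_dom n0 i0).
  have key := @conv _ _ _ t.-1 Qs (p th) n0 PQi.
  have key2 : (t.-1%:R%:E * d2 (p th) (Phi p ths) <= \sum_(i < t.-1) d2 (p th) (Qs i))%E.
    rewrite (d2_dom PM) (eq_bigr _ (fun i _ => d2_dom (PQi i))).
    exact: key.
  have key3 : (\sum_(i < t.-1) d2 (p th) (Qs i) <= t.-1%:R%:E * vsup p th)%E.
    rewrite (_ : (t.-1%:R%:E * vsup p th)%E = \sum_(i < t.-1) vsup p th)%E.
      by apply: lee_sum => i _; exact: hv.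
    by rewrite -(fineK vfin) sumEFin sumr_const card_ord -EFinM mulr_natl.
  have rge := g_sq_ge1 PM Phi1.
  rewrite -(d2_dom PM) in rge.
  have key4 := le_trans key2 key3.
  rewrite -(fineK vfin) in key4.
  set v := fine (vsup p th) in key4 *.
  have nn0 : (0 < t.-1%:R :> R) by rewrite ltr0n.
  move: key4 rge; case E: (d2 (p th) (Phi p ths)) => [r| |] //.
  - rewrite -!EFinM !lee_fin => k4 r1; rewrite (eta_r r E).
    rewrite ler_pM2l // in k4.
    rewrite ler_pM2l // lef_pV2 ?posrE //; lra.
  - by rewrite gt0_muley ?lte_fin // -EFinM leye_eq.
Qed.
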